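(* Let $r\ge 1$, $m=2^r$, let $n$ be an odd positive integer, and let $b$ be a positive integer having property $\mathcal{P}$ with respect to $n$. Then $x^{2^i n}+b^m$ is irreducible over $\mathbb{Z}$ for every integer $i$ with $0\le i\le r$.
   Context: For a positive integer $N$, a positive integer $b$ has property $\mathcal{P}$ with respect to $N$ if either $b$ is a prime number, or $b=(p_1^{b_1}p_2^{b_2}\cdots p_k^{b_k})^d$ where $k\ge 2$, $p_1,\dots,p_k$ are distinct primes, $b_1,\dots,b_k\ge 1$, $\gcd(b_1,\ldots,b_k)=1$, and $d$ is a positive integer with $\gcd(d,N)=1$. A monic polynomial in $\mathbb{Z}[x]$ of degree $\ge 1$ is irreducible over $\mathbb{Z}$ if it is not a product of two polynomials in $\mathbb{Z}[x]$ of degree at least $1$. *)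

(* Defs.v *)
From HB Require Import structures.
From mathcomp Require Import all_boot all_order all_algebra.
Set Implicit Arguments. Unset Strict Implicit. Unset Printing Implicit Defensive.
Import GRing.Theory Num.Theory.

(* The factorization
   b = (p_1^{b_1} ... p_k^{b_k})^d is expressed through the prime
   factorization of c := p_1^{b_1} ... p_k^{b_k}: its primes are
   [primes c] (distinct), its exponents are [logn p c] (all >= 1). *)
Definition propP (N b : nat) : Prop :=
  prime b \/
  exists c d : nat,
    [/\ 0 < d, coprime d N, b = c ^ d,
        2 <= size (primes c)
      & \big[gcdn/0]_(p <- primes c) logn p c = 1].

Definition irreducible_Z (f : {poly int}) : Prop :=
  (1 < size f)%N /\
  ~ exists g h : {poly int}, [/\ (1 < size g)%N, (1 < size h)%N & f = (g * h)%R].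

(* Main.v *)
Require Import Defs.
From mathcomp Require Import all_boot all_order all_algebra all_field zify.
Import GRing.Theory Num.Theory.

Lemma nt_dvd (n b r k d1 w : nat) :
  odd n -> propP n b -> w ^ (k * n) = (b ^ (2 ^ r)) ^ d1 -> n %| d1.
Proof.
move=> on [pb|[c [d [d0 cdn -> _ gc]]]] E.
  have := congr1 (logn b) E; rewrite !lognX (logn_prime b pb) eqxx muln1 => E2.
  have : n %| d1 * 2 ^ r by rewrite -E2 (mulnC k) -mulnA dvdn_mulr.
  by rewrite Gauss_dvdl // coprimeXr // coprimen2.
have H p : p \in primes c -> n %| d1 * logn p c.
  move=> _; have := congr1 (logn p) E; rewrite !lognX => E2.
  have : n %| (d1 * logn p c) * (2 ^ r * d).
    have -> : (d1 * logn p c) * (2 ^ r * d) = d1 * (2 ^ r * (d * logn p c)).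
      by nia.
    by rewrite -E2 (mulnC k) -mulnA dvdn_mulr.
  by rewrite Gauss_dvdl // coprimeMr coprimeXr ?coprimen2 // coprime_sym cdn.
have -> : d1 = d1 * \big[gcdn/0]_(p <- primes c) logn p c by rewrite gc muln1.
rewrite (big_morph (muln d1) (muln_gcdr d1) (muln0 d1)).
elim: (primes c) H => [|p s IH] H; first by rewrite big_nil dvdn0.
rewrite big_cons dvdn_gcd H ?mem_head // IH // => q qs; by apply: H; rewrite inE qs orbT.
Qed.

Local Open Scope ring_scope.

Lemma QsC_alg (Qs : fieldExtType rat) (QsC : {rmorphism Qs -> algC}) (m0 : {poly rat}) :
  map_poly QsC (map_poly (in_alg Qs) m0) = map_poly ratr m0.
Proof.
rewrite -map_poly_comp; apply: eq_map_poly => c /=.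
by rewrite alg_num_field fmorph_rat.
Qed.

Lemma deg_z (Qs : fieldExtType rat) (QsC : {rmorphism Qs -> algC}) (z : Qs) (i : nat) :
  z ^+ (2 ^ i) = -1 -> adjoin_degree 1%VS z = (2 ^ i)%N.
Proof.
move=> z1.
set m := minPoly 1%VS z.
have sm : size m = (adjoin_degree 1%VS z).+1 := size_minPoly _ _.
have up : (adjoin_degree 1%VS z <= 2 ^ i)%N.
  have : m %| 'X^(2 ^ i) + 1.
    apply: (minPoly_dvdp (K := 1%AS)).
      by rewrite rpredD ?rpredX ?polyOverX ?rpred1.
    by rewrite rootE hornerD hornerXn hornerC z1 addNr.
  have nz : 'X^(2 ^ i) + 1 != 0 :> {poly Qs}.
    by rewrite -size_poly_eq0 size_polyDl ?size_polyXn ?size_poly1 ?ltnS ?expn_gt0.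
  move=> H; have := dvdp_leq nz H.
  by rewrite sm size_polyDl ?size_polyXn ?size_poly1 ?ltnS ?expn_gt0.
set zeta := QsC z.
have zeta1 : zeta ^+ (2 ^ i) = -1 by rewrite /zeta -rmorphXn z1 rmorphN1.
have prim : (2 ^ i.+1)%N.-primitive_root zeta.
  have u : zeta ^+ (2 ^ i.+1) = 1.
    by rewrite expnS mulnC exprM zeta1 sqrrN expr1n.
  have [k pk kd] := prim_order_exists (expn_gt0 2 i.+1) u.
  case/(dvdn_pfactor _ _ (isT : prime 2)): kd => j ji kE.
  have nd : ~~ (k %| 2 ^ i)%N.
    rewrite (prim_order_dvd pk) zeta1 -subr_eq0 -opprD oppr_eq0.
    by rewrite (_ : 1 + 1 = 2%:R) // pnatr_eq0.
  have nj : ~~ (j <= i)%N by apply: contra nd => jle; rewrite kE dvdn_Pexp2l.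
  have -> : (2 ^ i.+1 = k)%N by rewrite kE; congr (_ ^ _)%N; lia.
  exact: pk.
have /polyOver1P [m0 Dm] := minPolyOver 1%AS z.
have r0 : root (map_poly ratr m0) zeta.
  by rewrite -(@QsC_alg Qs QsC) -Dm fmorph_root root_minPoly.
have [q [Dq _] Hq] := minCpolyP zeta.
have : (size q <= size m0)%N.
  apply: dvdp_leq; last by rewrite -Hq.
  by rewrite -size_poly_eq0 -(size_map_poly (in_alg Qs)) -Dm sm.
rewrite -(size_map_poly (ratr : {rmorphism rat -> algC})) -Dq (minCpoly_cyclotomic prim) size_cyclotomic.
rewrite totient_pfactor // -(size_map_poly (in_alg Qs)) -Dm sm /= mul1n ltnS => lo.
by apply/eqP; rewrite eqn_leq up lo.
Qed.

Lemma prodN_pow (rs : seq algC) (N : nat) (c : algC) :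
  (forall z, z \in rs -> z ^+ N = c) ->
  (\prod_(z <- rs) (- z)) ^+ N = ((-1) ^+ N * c) ^+ size rs.
Proof.
elim: rs => [|z rs IH] H; first by rewrite big_nil expr1n.
rewrite big_cons exprMn IH; last by move=> y yr; apply: H; rewrite inE yr orbT.
by rewrite (exprNn z) (H z (mem_head _ _)) exprS.
Qed.

Lemma intpoly_alg (Qs : fieldExtType rat) (g : {poly int}) :
  map_poly intr g = map_poly (in_alg Qs) (map_poly intr g) :> {poly Qs}.
Proof. by rewrite -map_poly_comp; apply: eq_map_poly => c /=; rewrite scaler_int. Qed.

Lemma ZOver (Qs : fieldExtType rat) (g : {poly int}) :
  map_poly intr g \is a polyOver (1%VS : {vspace Qs}).
Proof. by rewrite intpoly_alg alg_polyOver. Qed.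

Lemma sizeZ (Qs : fieldExtType rat) (g : {poly int}) :
  size (map_poly intr g : {poly Qs}) = size g.
Proof.
rewrite intpoly_alg size_map_poly size_map_inj_poly //; exact: intr_inj.
Qed.

Theorem lemma4 (r n b : nat) :
  (1 <= r)%N -> (0 < n)%N -> odd n -> (0 < b)%N -> propP n b ->
  forall i : nat, (i <= r)%N ->
    irreducible_Z ('X^(2 ^ i * n) + ((b ^ (2 ^ r))%N%:Z)%:P).
Proof.
move=> r1 n0 on b0 hP i ir.
set N := (2 ^ i * n)%N; set a := (b ^ (2 ^ r))%N.
set fZ := 'X^N + _.
have N0 : (0 < N)%N by rewrite muln_gt0 expn_gt0 n0.
have a0 : (0 < a)%N by rewrite expn_gt0 b0.
have sfZ : size fZ = N.+1.
  by rewrite size_polyDl ?size_polyXn // size_polyC; case: eqP.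
have mfZ : fZ \is monic by rewrite monicXnaddC.
set fC := map_poly intr fZ : {poly algC}.
have fCE : fC = 'X^N + (a%:R)%:P.
  by rewrite /fC rmorphD /= map_polyXn map_polyC /= -[a%:Z]natz rmorph_nat.
have [al ral] : exists al, root fC al.
  apply/closed_rootP; rewrite /fC size_map_inj_poly ?sfZ //; first by rewrite eqSS -lt0n.
  exact: (@intr_inj algC).
have alN : al ^+ N = - a%:R.
  by move: ral; rewrite fCE rootE hornerD hornerXn hornerC addr_eq0 => /eqP.
have [Qs [QsC [s1 Ds1 _]]] := num_field_exists [:: al].
case: s1 Ds1 => [|a1 [|]] // [Da1].
set fQ := map_poly intr fZ : {poly Qs}.
have fQC : map_poly QsC fQ = fC.
  by rewrite /fQ -map_poly_comp; apply: eq_map_poly => c /=; rewrite rmorph_int.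
have rQ : root fQ a1 by rewrite -(fmorph_root QsC) fQC Da1.
set p := minPoly 1%VS a1; set d1 := adjoin_degree 1%VS a1.
have sp : size p = d1.+1 := size_minPoly _ _.
have pdvd : p %| fQ := minPoly_dvdp (K := 1%AS) (ZOver _ fZ) rQ.
have fQ0 : fQ != 0 by rewrite -size_poly_eq0 sizeZ sfZ.
have d1N : (d1 <= N)%N by have := dvdp_leq fQ0 pdvd; rewrite sp sizeZ sfZ.
have d10 : (0 < d1)%N by [].
have d2 : (2 ^ i %| d1)%N.
  pose t := (b ^ (2 ^ (r - i)))%N.
  have ta : (t ^ (2 ^ i) = a)%N by rewrite /t -expnM -expnD subnK.
  have t0 : (t%:R : algC) != 0 by rewrite pnatr_eq0 -lt0n expn_gt0 b0.
  pose z1 := ((t%:R)^-1 : rat) *: a1 ^+ n.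
  have z1E : z1 ^+ (2 ^ i) = -1.
    apply: (fmorph_inj QsC); rewrite rmorphXn rmorphN1 rmorphZ_num (rmorphXn QsC) Da1.
    rewrite exprMn -exprM (mulnC n) alN fmorphV rmorph_nat exprVn -natrX ta mulrN mulVf //.
    by rewrite -ta natrX expf_neq0.
  have dz := @deg_z Qs QsC z1 i z1E.
  have sub : (<<1%AS; z1>> <= <<1%AS; a1>>)%VS.
    apply/FadjoinP; split; first exact: sub1v.
    by rewrite memvZ // rpredX // memv_adjoin.
  have := field_dimS sub.
  by rewrite !dim_Fadjoin dimv1 !muln1 dz.
have dn : (n %| d1)%N.
  have /polyOver1P [p0 Dp] := minPolyOver 1%AS a1.
  pose pC := map_poly QsC p.
  have pCE : pC = map_poly ratr p0 by rewrite /pC /p Dp QsC_alg.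
  have mpC : pC \is monic by rewrite map_monic monic_minPoly.
  have pCf : pC %| fC by rewrite -fQC dvdp_map.
  have [rs Drs] := closed_field_poly_normal pC.
  rewrite (monicP mpC) scale1r in Drs.
  have srs : size rs = d1.
    by have := size_prod_XsubC rs id; rewrite -Drs /pC size_map_poly sp => -[].
  have rsN : forall z, z \in rs -> z ^+ N = - a%:R.
    move=> z zr; have : root fC z by apply: root_dvdp pCf _; rewrite Drs root_prod_XsubC.
    by rewrite fCE rootE hornerD hornerXn hornerC addr_eq0 => /eqP.
  pose c0 := pC.[0].
  have c0E : c0 = \prod_(z <- rs) (- z).
    by rewrite /c0 Drs horner_prod; apply: eq_bigr => z _; rewrite hornerXsubC sub0r.
  have c0int : c0 \in Num.int.
    apply: Cint_rat_Aint.
      by rewrite /c0 pCE horner_coef0 coef_map Crat_rat.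
    rewrite c0E big_seq rpred_prod // => z zr; rewrite rpredN.
    have : root fC z by apply: root_dvdp pCf _; rewrite Drs root_prod_XsubC.
    move/root_monic_Aint; apply; first by rewrite fCE monicXnaddC.
    by apply/polyOverP => j; rewrite coef_map intr_int.
  have [w Dw] := natrP (natr_norm_int c0int).
  have E : (w ^ N)%N = (a ^ d1)%N.
    apply/eqP; rewrite -(eqr_nat algC) !natrX -Dw -normrX c0E (@prodN_pow rs N _ rsN) srs.
    by rewrite normrX normrM normrX normrN normr1 expr1n mul1r normrN normr_nat /a natrX.
  exact: nt_dvd on hP E.
have d1E : d1 = N.
  apply/eqP; rewrite eqn_leq d1N dvdn_leq //.
  by rewrite /N Gauss_dvd ?d2 ?dn // coprimeXl // coprime2n.
split; first by rewrite sfZ ltnS.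
case=> g [h [sg sh E]].
have g0 : g != 0 by rewrite -size_poly_eq0; case: (size g) sg.
have h0 : h != 0 by rewrite -size_poly_eq0; case: (size h) sh.
have key (u : {poly int}) : u != 0 -> root (map_poly intr u : {poly Qs}) a1 -> (N.+1 <= size u)%N.
  move=> nu ru; have u0 : (map_poly intr u : {poly Qs}) != 0.
    by rewrite -size_poly_eq0 sizeZ size_poly_eq0.
  by have := dvdp_leq u0 (minPoly_dvdp (K := 1%AS) (ZOver _ u) ru); rewrite sp d1E sizeZ.
have sgh := size_mul g0 h0; rewrite -E sfZ in sgh.
have F (x y : nat) : (1 < x -> 1 < y -> N.+1 = (x + y).-1 -> N < x -> False)%N by lia.
move: rQ; rewrite /fQ E rmorphM rootM => /orP [/(key _ g0)|/(key _ h0)] HH.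
  exact: F sg sh sgh HH.
by apply: F sh sg _ HH; rewrite addnC.
Qed.
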